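(* Let $d_v\in\{2,3\}$, $L>0$, and consider $n$ particles with positions $x_p\in[0,L)$ (periodic), velocities $v_p\in\mathbb{R}^{d_v}$ and weights $w_p>0$, $p=1,\dots,n$. Let $s:[0,L)\times\mathbb{R}^{d_v}\to\mathbb{R}^{d_v}$ be an arbitrary function (a score approximation), let $\psi_\eta$ be a symmetric nonnegative spatial kernel, and define for each $p$ \[ U^\eta(x_p,v_p) = \sum_{q=1}^n w_q\,\psi_\eta(x_p-x_q)\,A(v_p-v_q)\big[s(x_p,v_p) - s(x_q,v_q)\big], \] where $A(z) = |z|^{\gamma+2}\big(I_{d_v} - zz^\top/|z|^2\big)$. Then, for any $\nu\ge 0$: (i) (conservation of momentum and energy) \[ \sum_p w_p\,U^\eta(x_p,v_p) = 0,\qquad \sum_p w_p\, v_p\cdot U^\eta(x_p,v_p) = 0; \] (ii) (estimated entropy dissipation) \[ -\nu\sum_p w_p\, s(x_p,v_p)\cdot U^\eta(x_p,v_p) \le 0. \]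
   Context: $\gamma$ is a real exponent (the Coulomb case is $\gamma=-d_v$). Terms with $v_p=v_q$ in the sum defining $U^\eta$ are taken to be zero (where $A(0)$ is undefined). The kernel $\psi_\eta$ is evaluated on periodic differences of positions and satisfies $\psi_\eta(y)=\psi_\eta(-y)\ge 0$; a typical choice is the hat function $\psi_\eta(x)=\frac1\eta\big(1-\frac{|x|}{\eta}\big)_+$ with $\eta=L/M$. *)

(* Defs.v *)
From HB Require Import structures.
From mathcomp Require Import all_boot all_order all_algebra.
From mathcomp Require Import reals exp.
Set Implicit Arguments. Unset Strict Implicit. Unset Printing Implicit Defensive.
Import Order.TTheory GRing.Theory Num.Theory.
Local Open Scope ring_scope.

Definition dotv (R : realType) (d : nat) (u v : 'cV[R]_d) : R :=
  \sum_(i < d) u i 0 * v i 0.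

Definition vnorm (R : realType) (d : nat) (z : 'cV[R]_d) : R :=
  Num.sqrt (dotv z z).

(* Landau-type collision matrix A(z) = |z|^(gamma+2) (I - z z^T / |z|^2),
   meaningful for z <> 0. *)
Definition Amat (R : realType) (d : nat) (gamma : R) (z : 'cV[R]_d) : 'M[R]_d :=
  powR (vnorm z) (gamma + 2) *: (1%:M - (vnorm z ^- 2) *: (z *m z^T)).

Definition Ueta (R : realType) (d n : nat) (gamma : R) (psi : R -> R)
  (s : R -> 'cV[R]_d -> 'cV[R]_d)
  (x : 'I_n -> R) (v : 'I_n -> 'cV[R]_d) (w : 'I_n -> R) (p : 'I_n) : 'cV[R]_d :=
  \sum_(q < n)
    (if v p == v q then 0
     else (w q * psi (x p - x q)) *:
            (Amat gamma (v p - v q) *m (s (x p) (v p) - s (x q) (v q)))).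

(* Main.v *)
Require Import Defs.
From HB Require Import structures.
From mathcomp Require Import all_boot all_order all_algebra.
From mathcomp Require Import reals exp.
Import Order.TTheory GRing.Theory Num.Theory.
Local Open Scope ring_scope.

Section Aux.
Variable R : realType.
Variable d : nat.
Implicit Types (u v z : 'cV[R]_d).

Lemma dotvC u v : dotv u v = dotv v u.
Proof. by apply: eq_bigr => i _; rewrite mulrC. Qed.

Lemma dotvDr u v1 v2 : dotv u (v1 + v2) = dotv u v1 + dotv u v2.
Proof. by rewrite /dotv -big_split; apply: eq_bigr => i _; rewrite mxE mulrDr. Qed.

Lemma dotvZr u k v : dotv u (k *: v) = k * dotv u v.
Proof. by rewrite /dotv mulr_sumr; apply: eq_bigr => i _; rewrite mxE mulrCA. Qed.

Lemma dotvNr u v : dotv u (- v) = - dotv u v.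
Proof. by rewrite -scaleN1r dotvZr mulN1r. Qed.

Lemma dotvBr u v1 v2 : dotv u (v1 - v2) = dotv u v1 - dotv u v2.
Proof. by rewrite dotvDr dotvNr. Qed.

Lemma dotvBl u1 u2 v : dotv (u1 - u2) v = dotv u1 v - dotv u2 v.
Proof. by rewrite dotvC dotvBr !(dotvC v). Qed.

Lemma dotvZl k u v : dotv (k *: u) v = k * dotv u v.
Proof. by rewrite dotvC dotvZr dotvC. Qed.

Lemma dotv0r u : dotv u 0 = 0.
Proof. by rewrite -(scale0r (0 : 'cV[R]_d)) dotvZr mul0r. Qed.

Lemma dotv_sumr n u (f : 'I_n -> 'cV[R]_d) :
  dotv u (\sum_(q < n) f q) = \sum_(q < n) dotv u (f q).
Proof.
rewrite /dotv exchange_big /=; apply: eq_bigr => i _.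
by rewrite summxE mulr_sumr.
Qed.

Lemma dotv_ge0 u : 0 <= dotv u u.
Proof. by apply: sumr_ge0 => i _; rewrite -expr2 sqr_ge0. Qed.

Lemma dotv_gt0 u : u != 0 -> 0 < dotv u u.
Proof.
move=> u0; rewrite lt0r dotv_ge0 andbT; apply: contra u0 => /eqP H.
apply/eqP/matrixP => i j; rewrite (ord1 j) mxE.
have hp : forall k : 'I_d, predT k -> 0 <= u k 0 * u k 0 by move=> k _; rewrite -expr2 sqr_ge0.
have := psumr_eq0P hp H (i := i) isT.
by move=> /eqP; rewrite mulf_eq0 orbb => /eqP.
Qed.

Lemma zzT z u : z *m z^T *m u = dotv z u *: z.
Proof.
apply/matrixP => i j; rewrite (ord1 j) -mulmxA !mxE big_ord1 mxE mulrC.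
by congr (_ * _); rewrite /dotv; apply: eq_bigr => k _; rewrite mxE.
Qed.

Lemma AmatE gamma z u : Amat gamma z *m u =
  powR (vnorm z) (gamma + 2) *: (u - (vnorm z ^- 2 * dotv z u) *: z).
Proof.
by rewrite /Amat -scalemxAl mulmxBl mul1mx -scalemxAl zzT scalerA.
Qed.

Lemma vnorm2 z : vnorm z ^+ 2 = dotv z z.
Proof. by rewrite /vnorm sqr_sqrtr // dotv_ge0. Qed.

Lemma Amat_orth gamma z u : z != 0 -> dotv z (Amat gamma z *m u) = 0.
Proof.
move=> z0; have N0 := dotv_gt0 z z0.
rewrite AmatE dotvZr dotvBr dotvZr vnorm2 (dotvC z u).
rewrite -mulrA (mulrC (dotv u z)) mulrA mulVf ?mul1r ?subrr ?mulr0 //.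
by rewrite gt_eqF.
Qed.

Lemma Amat_psd gamma z u : z != 0 -> 0 <= dotv u (Amat gamma z *m u).
Proof.
move=> z0; have N0 := dotv_gt0 z z0.
rewrite AmatE dotvZr; apply: mulr_ge0; first exact: powR_ge0.
rewrite vnorm2; set t := _ * dotv z u.
have -> : dotv u (u - t *: z) = dotv (u - t *: z) (u - t *: z).
  have tN : t * dotv z z = dotv z u by rewrite /t mulrAC mulVf ?mul1r // gt_eqF.
  rewrite dotvBl [dotv (t *: z) _]dotvZl !dotvBr !dotvZr tN (dotvC u z).
  by rewrite subrr mulr0 subr0.
exact: dotv_ge0.
Qed.

Lemma Amat_opp gamma z : Amat gamma (- z) = Amat gamma z.
Proof.
have Hn : vnorm (- z) = vnorm z.
  rewrite /vnorm dotvNr dotvC dotvNr opprK //.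
rewrite /Amat Hn; congr (_ *: (_ - _ *: _)); apply/matrixP => i j; rewrite !mxE.
by apply: eq_bigr => k _; rewrite !mxE mulrNN.
Qed.

End Aux.

Lemma sym2 (V : nmodType) n (G : 'I_n -> 'I_n -> V) :
  (\sum_(p < n) \sum_(q < n) G p q) *+ 2 =
  \sum_(p < n) \sum_(q < n) (G p q + G q p).
Proof.
rewrite mulr2n {2}(exchange_big) /= -big_split /=.
by apply: eq_bigr => p _; rewrite -big_split.
Qed.

Lemma antisym0 (R : realType) d n (F : 'I_n -> 'I_n -> 'cV[R]_d) :
  (forall p q, F q p = - F p q) -> \sum_(p < n) \sum_(q < n) F p q = 0.
Proof.
move=> H; have E := @sym2 _ n F.
have Z : \sum_(p < n) \sum_(q < n) (F p q + F q p) = 0.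
  apply: big1 => p _; apply: big1 => q _.
  rewrite H; exact: (@addNr _ (F q p)).
move: E; rewrite Z.
by rewrite -scaler_nat => /eqP; rewrite scaler_eq0 pnatr_eq0 /= => /eqP.
Qed.

Theorem theorem3 (R : realType) (dv n : nat) (L gamma nu : R)
  (psi : R -> R) (s : R -> 'cV[R]_dv -> 'cV[R]_dv)
  (x : 'I_n -> R) (v : 'I_n -> 'cV[R]_dv) (w : 'I_n -> R) :
  (dv = 2%N \/ dv = 3%N) ->
  0 < L ->
  (forall p, 0 <= x p < L) ->
  (forall p, 0 < w p) ->
  (forall y, psi y = psi (- y)) ->
  (forall y, 0 <= psi y) ->
  0 <= nu ->
  [/\ \sum_(p < n) w p *: Ueta gamma psi s x v w p = 0,
      \sum_(p < n) w p * dotv (v p) (Ueta gamma psi s x v w p) = 0 &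
      - nu * (\sum_(p < n) w p * dotv (s (x p) (v p)) (Ueta gamma psi s x v w p)) <= 0].
Proof.
move=> _ _ _ hw hpsi hpsi0 hnu.
pose S p := s (x p) (v p).
pose F p q := w p *: (if v p == v q then 0 else (w q * psi (x p - x q)) *:
            (Amat gamma (v p - v q) *m (S p - S q))).
have FE p q : F p q = if v p == v q then 0 else (w p * (w q * psi (x p - x q))) *:
            (Amat gamma (v p - v q) *m (S p - S q)).
  by rewrite /F; case: eqP => _; rewrite ?scaler0 ?scalerA.
have Fanti p q : F q p = - F p q.
  rewrite !FE (eq_sym (v q)); case: eqP => _; first by rewrite oppr0.
  rewrite -[x q - x p]opprB -[v q - v p]opprB -[S q - S p]opprB -hpsi Amat_opp.
  by rewrite mulmxN scalerN mulrCA.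
have UE p : Ueta gamma psi s x v w p = \sum_(q < n) (if v p == v q then 0 else (w q * psi (x p - x q)) *:
            (Amat gamma (v p - v q) *m (S p - S q))) by [].
have dotE (f : 'I_n -> 'cV[R]_dv) :
  (\sum_(p < n) w p * dotv (f p) (Ueta gamma psi s x v w p)) *+ 2 =
  \sum_(p < n) \sum_(q < n) dotv (f p - f q) (F p q).
  have -> : \sum_(p < n) w p * dotv (f p) (Ueta gamma psi s x v w p) =
            \sum_(p < n) \sum_(q < n) dotv (f p) (F p q).
    apply: eq_bigr => p _; rewrite UE dotv_sumr mulr_sumr.
    by apply: eq_bigr => q _; rewrite /F dotvZr.
  rewrite sym2; apply: eq_bigr => p _; apply: eq_bigr => q _.
  by rewrite (Fanti p q) dotvNr dotvBl.
split.
- apply: (etrans _ (@antisym0 _ _ _ F Fanti)); apply: eq_bigr => p _.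
  by rewrite UE scaler_sumr.
- have Z : \sum_(p < n) \sum_(q < n) dotv (v p - v q) (F p q) = 0.
    apply: big1 => p _; apply: big1 => q _; rewrite FE; case: eqP => e.
      by rewrite dotv0r.
    by rewrite dotvZr Amat_orth ?mulr0 // subr_eq0; apply/eqP.
  by move/eqP: (dotE v); rewrite Z mulrn_eq0 /= => /eqP.
- rewrite mulNr oppr_le0 mulr_ge0 //.
  have : 0 <= \sum_(p < n) \sum_(q < n) dotv (S p - S q) (F p q).
    apply: sumr_ge0 => p _; apply: sumr_ge0 => q _.
    rewrite FE; case: eqP => e; first by rewrite dotv0r.
    rewrite dotvZr; apply: mulr_ge0.
      apply: mulr_ge0; first exact: ltW.
      by apply: mulr_ge0; [exact: ltW | exact: hpsi0].
    by apply: Amat_psd; rewrite subr_eq0; apply/eqP.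
  by rewrite -(dotE S) (pmulrn_lge0 _ (n:=2)).
Qed.
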